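(* If $G$ is a complete multipartite graph on $2n$ vertices with independence number $\alpha(G)\leq n$, then $G$ contains at least $n!$ perfect matchings.
   Context: A graph $G$ is complete multipartite if there is a partition of $V(G)$ such that two vertices are adjacent if and only if they lie in different parts. $\alpha(G)$ is the size of a largest independent (edge-free) vertex set. A perfect matching is a set of vertex-disjoint edges covering all vertices. *)

(* Defs.v *)
From mathcomp Require Import all_boot.
Set Implicit Arguments. Unset Strict Implicit. Unset Printing Implicit Defensive.

Definition simple_graph (T : finType) (e : rel T) : Prop :=
  symmetric e /\ irreflexive e.

Definition complete_multipartite (T : finType) (e : rel T) : Prop :=
  exists P : {set {set T}}, partition P [set: T] /\
    forall x y : T, e x y = (pblock P x != pblock P y).

Definition independent (T : finType) (e : rel T) (S : {set T}) : bool :=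
  [forall x in S, forall y in S, ~~ e x y].

Definition alpha (T : finType) (e : rel T) : nat :=
  \max_(S : {set T} | independent e S) #|S|.

Definition is_edge (T : finType) (e : rel T) (A : {set T}) : bool :=
  [exists x, exists y, (A == [set x; y]) && e x y].

Definition perfect_matching (T : finType) (e : rel T) (M : {set {set T}}) : bool :=
  [forall A in M, is_edge e A] && partition M [set: T].

(* Main.v *)
Require Import Defs.
From mathcomp Require Import all_boot zify.

Section Main.
Variables (T : finType) (col : T -> {set T}) (e : rel T).
Hypothesis He : forall x y, e x y = (col x != col y).

Definition pm (S : {set T}) (M : {set {set T}}) :=
  [forall A in M, is_edge e A] && partition M S.
Definition cls (S : {set T}) c := [set z in S | col z == c].

Lemma pm_ext (S : {set T}) (x y : T) (M' : {set {set T}}) : x \in S -> y \in S -> col x != col y ->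
  pm (S :\: [set x; y]) M' -> pm S ([set x; y] |: M').
Proof.
move=> xS yS cxy /andP[/forallP hE /and3P[/eqP hc ht h0]].
have sub : forall B, B \in M' -> B \subset S :\: [set x; y].
  by move=> B hB; rewrite -hc; apply: (bigcup_sup B).
apply/andP; split.
  apply/forallP => A; apply/implyP => /setU1P [->|hA].
    by apply/existsP; exists x; apply/existsP; exists y; rewrite eqxx He.
  by have /implyP := hE A; apply.
have [tU nin] : trivIset ([set x; y] |: M') /\ [set x; y] \notin M'.
  apply: trivIsetU1 => //.
  move=> B hB; rewrite -setI_eq0; apply/eqP/setP => z; rewrite !inE.
  apply/negbTE; apply/andP => -[hz hzB].
  by have := subsetP (sub B hB) z hzB; rewrite !inE hz.
apply/and3P; split => //.
  rewrite /cover bigcup_setU big_set1 -/(cover M') hc.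
  apply/eqP/setP => z; rewrite !inE.
  have [->|_] := eqVneq z x; first by rewrite xS.
  by have [->|_] := eqVneq z y; rewrite ?yS.
rewrite !inE negb_or h0 andbT; apply/eqP => /setP /(_ x).
by rewrite !inE eqxx.
Qed.

Lemma pm_sub (S : {set T}) M B : pm S M -> B \in M -> B \subset S.
Proof.
by move=> /andP[_ /and3P[/eqP hc _ _]] hB; rewrite -hc; apply: (bigcup_sup B).
Qed.

Arguments pm_sub {S M B}.

Lemma pm_nin (S : {set T}) M x y : pm (S :\: [set x; y]) M -> [set x; y] \notin M.
Proof.
move=> hM; apply/negP => hin.
by have := subsetP (pm_sub hM hin) x; rewrite !inE eqxx /= => /(_ isT).
Qed.

Arguments pm_nin {S M x y}.

Lemma cls_two (S : {set T}) c1 c2 y : c1 != c2 -> y \in S ->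
  col y != c1 -> col y != c2 -> (#|cls S c1| + #|cls S c2|).+1 <= #|S|.
Proof.
move=> h12 yS h1 h2.
have sub : y |: (cls S c1 :|: cls S c2) \subset S.
  by apply/subsetP => z; rewrite !inE => /orP[/eqP->//|/orP[/andP[]//|/andP[]//]].
have := subset_leq_card sub; rewrite cardsU1 cardsU.
have -> : cls S c1 :&: cls S c2 = set0.
  apply/setP => z; rewrite !inE; apply/negbTE; apply/andP.
  by move=> -[/andP[_ /eqP e1] /andP[_ /eqP e2]]; rewrite -e1 e2 eqxx in h12.
by rewrite cards0 subn0 !inE yS (negbTE h1) (negbTE h2).
Qed.

Lemma main n : forall S : {set T}, #|S| = n.*2 -> (forall c, #|cls S c| <= n) ->
  n`! <= #|[set M | pm S M]|.
Proof.
elim: n => [|n IH] S hS hc.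
  rewrite fact0 card_gt0; apply/set0Pn; exists set0; rewrite inE.
  have -> : S = set0 by apply: cards0_eq.
  apply/andP; split; first by apply/forallP => A; rewrite inE.
  apply/and3P; split; first by rewrite /cover big_set0.
    by rewrite /trivIset /cover !big_set0 cards0.
  by rewrite inE.
have [x0 x0S] : exists x0, x0 \in S.
  by apply/set0Pn; rewrite -card_gt0 hS.
case: (@arg_maxnP _ x0 (mem S) (fun x => #|cls S (col x)|) x0S) => x xS xmax.
set A := cls S (col x).
set N := S :\: A.
have hA : #|A| <= n.+1 by apply: hc.
have hN : n.+1 <= #|N|.
  rewrite /N cardsD.
  have -> : S :&: A = A by apply/setIidPr/subsetP => z; rewrite inE => /andP[].
  by rewrite hS; move: hA; rewrite doubleS; lia.
have colN : forall y, y \in N -> col y != col x.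
  by move=> y; rewrite !inE => /andP[h yS]; apply: contraNneq h => ->; rewrite yS eqxx.
have NS : forall y, y \in N -> y \in S by move=> y; rewrite inE => /andP[].
pose F y := if y \in N then [set [set x; y] |: M' | M' in [set M | pm (S :\: [set x; y]) M]] else set0.
have hcard : forall y, y \in N -> n`! <= #|F y|.
  move=> y yN; rewrite /F yN card_in_imset; last first.
    move=> M1 M2; rewrite !inE => h1 h2 e12.
    by rewrite -(setU1K (pm_nin h1)) e12 setU1K // (pm_nin h2).
  have cyx := colN y yN; have yS := NS y yN.
  have xy : x != y by apply: contraNneq cyx => ->.
  apply: IH.
    rewrite cardsD.
    have -> : S :&: [set x; y] = [set x; y].
      by apply/setIidPr/subsetP => z; rewrite !inE => /orP[]/eqP->.
    by rewrite cards2 xy hS doubleS; lia.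
  move=> c.
  have [cx|cx] := eqVneq c (col x).
    have sub : cls (S :\: [set x; y]) c \subset A :\ x.
      by apply/subsetP => z; rewrite !inE cx => /andP[/andP[/norP[zx _] ->] ->]; rewrite zx.
    have := subset_leq_card sub; have := cardsD1 x A.
    have xA : x \in A by rewrite /A /cls !inE eqxx andbT; exact: xS.
    by rewrite xA; lia.
  have [cy|cy] := eqVneq c (col y).
    have sub : cls (S :\: [set x; y]) c \subset cls S (col y) :\ y.
      by apply/subsetP => z; rewrite !inE cy => /andP[/andP[/norP[_ zy] ->] ->]; rewrite zy.
    have := subset_leq_card sub; have := cardsD1 y (cls S (col y)); have := hc (col y).
    have yC : y \in cls S (col y) by rewrite /cls !inE yS eqxx.
    by rewrite yC; lia.
  have sub : cls (S :\: [set x; y]) c \subset cls S c.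
    by apply/subsetP => z; rewrite !inE => /andP[/andP[_ ->] ->].
  apply: (leq_trans (subset_leq_card sub)).
  rewrite leqNgt; apply/negP => big.
  have [z] : exists z, z \in cls S c by apply/set0Pn; rewrite -card_gt0; lia.
  rewrite inE => /andP[zS /eqP zc].
  have := xmax z zS; rewrite zc -/A => hAC.
  have := cls_two S (col x) c y.
  rewrite eq_sym cx yS cyx eq_sym cy => /(_ isT isT isT isT).
  move: hAC => /= hAC; rewrite -/A hS doubleS; lia.
have disj : forall i j, i != j -> [disjoint F i & F j].
  move=> i j ij; rewrite -setI_eq0 /F.
  case: ifP => iN; last by rewrite set0I.
  case: ifP => jN; last by rewrite setI0.
  apply/eqP/setP => M; rewrite in_setI in_set0.
  apply/negbTE/andP => -[/imsetP[M1 h1 ->] /imsetP[M2 h2 e12]].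
  rewrite inE in h1; rewrite inE in h2.
  have : [set x; j] \in [set x; i] |: M1 by rewrite e12 setU11.
  case/setU1P => [eji|hin].
    have : j \in [set x; i] by rewrite -eji !inE eqxx orbT.
    rewrite !inE => /orP[/eqP jx|/eqP ji].
      by have := colN j jN; rewrite jx eqxx.
    by rewrite ji eqxx in ij.
  by have := subsetP (pm_sub h1 hin) x; rewrite !inE eqxx /= => /(_ isT).
have FS : \bigcup_y F y \subset [set M | pm S M].
  apply/bigcupsP => y _; rewrite /F; case: ifP => yN; last by apply: sub0set.
  apply/subsetP => M /imsetP[M' hM' ->]; rewrite inE; rewrite inE in hM'.
  apply: pm_ext => //; [exact: NS | rewrite eq_sym; exact: colN].
rewrite factS; apply: (leq_trans (leq_mul hN (leqnn n`!))).
rewrite -sum_nat_const.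
apply: (@leq_trans (\sum_(y in N) #|F y|)); first by apply: leq_sum => y yN; apply: hcard.
apply: (@leq_trans (\sum_y #|F y|)).
  by rewrite [X in _ <= X](bigID (mem N)) /=; apply: leq_addr.
apply: (leq_trans _ (subset_leq_card FS)).
rewrite -sum1_card (partition_disjoint_bigcup _ _ disj).
by apply: leq_sum => y _; rewrite sum1_card.
Qed.

End Main.

Theorem lemma27 (T : finType) (e : rel T) (n : nat) :
  simple_graph e ->
  complete_multipartite e ->
  #|T| = n.*2 ->
  alpha e <= n ->
  n`! <= #|[set M : {set {set T}} | perfect_matching e M]|.
Proof.
move=> _ [P [hP hE]] hT ha.
have := @main T (pblock P) e hE n [set: T].
rewrite cardsT hT => /(_ erefl) h.
apply: h => c; apply: leq_trans ha; rewrite /alpha.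
apply: (@leq_bigmax_cond _ (fun S : {set T} => independent e S) (fun S : {set T} => #|S|)).
rewrite /independent; apply/forallP => u; apply/implyP.
rewrite /cls inE => /andP[_ /eqP hu].
apply/forallP => v; apply/implyP; rewrite inE => /andP[_ /eqP hv].
by rewrite hE hu hv eqxx.
Qed.
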